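(* Let $P$ and $Q$ be irreducible transition matrices on the finite set $S$, both reversible with respect to $\pi$. If $P$ efficiency-dominates $Q$ and $P\ne Q$, then $\mathrm{trace}(P)<\mathrm{trace}(Q)$.
   Context: $S$ is a finite set, and $\pi$ is a probability distribution on $S$ with $\pi(x)>0$ for all $x$. A transition matrix $P$ is reversible with respect to $\pi$ if $\pi(x)P(x,y)=\pi(y)P(y,x)$ for all $x,y$; irreducible if every state can be reached from every other with positive probability in some number of steps. For a Markov chain $X_1,X_2,\dots$ with transition matrix $P$ and $X_1\sim\pi$, $v(f,P)=\lim_{N\to\infty}\frac1N\mathrm{Var}\big(\sum_{i=1}^N f(X_i)\big)$. $P$ efficiency-dominates $Q$ if $v(f,P)\le v(f,Q)$ for all $f:S\to\mathbb R$. *)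

(* Defs.v *)
From HB Require Import structures.
From mathcomp Require Import all_boot all_order all_algebra.
From mathcomp Require Import all_classical all_reals all_analysis.
Set Implicit Arguments. Unset Strict Implicit. Unset Printing Implicit Defensive.
Import Order.TTheory GRing.Theory Num.Theory.
Import numFieldNormedType.Exports.
Local Open Scope ring_scope.

Section MC.
Variables (R : realType) (T : finType).

Definition full_distribution (pi : T -> R) :=
  (forall x, 0 < pi x) /\ \sum_x pi x = 1.

Definition transition_matrix (P : T -> T -> R) :=
  (forall x y, 0 <= P x y) /\ (forall x, \sum_y P x y = 1).

Definition reversible (pi : T -> R) (P : T -> T -> R) :=
  forall x y, pi x * P x y = pi y * P y x.

Fixpoint mpow (P : T -> T -> R) (n : nat) : T -> T -> R :=
  match n with
  | 0 => fun x y => if x == y then 1 else 0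
  | n'.+1 => fun x y => \sum_z mpow P n' x z * P z y
  end.

Definition irreducible (P : T -> T -> R) :=
  forall x y, exists n, 0 < mpow P n x y.

Definition trace (P : T -> T -> R) : R := \sum_x P x x.

(* predecessor of a positive index i : 'I_N (returns 0 for i = 0) *)
Definition pred_ord (N : nat) (i : 'I_N) : 'I_N :=
  Ordinal (leq_ltn_trans (leq_pred i) (ltn_ord i)).

(* probability that (X_1,...,X_N) = (x 0, ..., x (N-1)) for the chain
   with transition matrix P started at X_1 ~ pi *)
Definition path_prob (pi : T -> R) (P : T -> T -> R) (N : nat)
  (x : {ffun 'I_N -> T}) : R :=
  \prod_(i < N) (if val i == 0%N then pi (x i) else P (x (pred_ord i)) (x i)).

Definition path_sum (f : T -> R) (N : nat) (x : {ffun 'I_N -> T}) : R :=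
  \sum_(i < N) f (x i).

Definition mean_sum (pi : T -> R) (P : T -> T -> R) (f : T -> R) (N : nat) : R :=
  \sum_(x : {ffun 'I_N -> T}) path_prob pi P x * path_sum f x.

Definition var_sum (pi : T -> R) (P : T -> T -> R) (f : T -> R) (N : nat) : R :=
  \sum_(x : {ffun 'I_N -> T})
     path_prob pi P x * (path_sum f x - mean_sum pi P f N) ^+ 2.

Definition asymp_var (pi : T -> R) (f : T -> R) (P : T -> T -> R) : R :=
  limn ((fun N : nat => var_sum pi P f N / N%:R) : R^nat).

Definition efficiency_dominates (pi : T -> R) (P Q : T -> T -> R) :=
  forall f : T -> R, asymp_var pi f P <= asymp_var pi f Q.

End MC.

(* Main.v *)
Require Import Defs.
From HB Require Import structures.
From mathcomp Require Import all_boot all_order all_algebra.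
From mathcomp Require Import all_classical all_reals all_analysis.
From mathcomp Require Import ring lra.
Import Order.TTheory GRing.Theory Num.Theory.
Import numFieldNormedType.Exports.
Local Open Scope classical_set_scope.
Local Open Scope ring_scope.
Set Implicit Arguments. Unset Strict Implicit. Unset Printing Implicit Defensive.
Section Paths.
Variables (R : realType) (T : finType) (P : T -> T -> R).

Definition ppm (mu : T -> R) N (x : {ffun 'I_N -> T}) : R :=
  \prod_(i < N) (if val i == 0%N then mu (x i) else P (x (pred_ord i)) (x i)).
Definition EE mu N (H : nat -> T -> R) :=
  \sum_(x : {ffun 'I_N -> T}) ppm mu x * \prod_(i < N) H i (x i).
Definition step (mu h : T -> R) := fun s => \sum_t mu t * h t * P t s.

Definition consf N (t : T) (y : {ffun 'I_N -> T}) : {ffun 'I_N.+1 -> T} :=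
  [ffun i => if unlift ord0 i is Some j then y j else t].

Lemma consf0 N t (y : {ffun 'I_N -> T}) : consf t y ord0 = t.
Proof. by rewrite ffunE unlift_none. Qed.
Lemma consfS N t (y : {ffun 'I_N -> T}) j : consf t y (lift ord0 j) = y j.
Proof. by rewrite ffunE liftK. Qed.

Lemma sum_ffunS N (F : {ffun 'I_N.+1 -> T} -> R) :
  \sum_x F x = \sum_t \sum_(y : {ffun 'I_N -> T}) F (consf t y).
Proof.
rewrite pair_big /=.
rewrite (reindex (fun p : T * {ffun 'I_N -> T} => consf p.1 p.2)) //.
exists (fun x : {ffun 'I_N.+1 -> T} => (x ord0, [ffun j : 'I_N => x (lift ord0 j)])).
- move=> [t y] _ /=; rewrite consf0; congr pair; apply/ffunP => j.
  by rewrite ffunE consfS.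
- move=> x _; apply/ffunP => i; rewrite ffunE /=.
  by case: unliftP => [j ->| ->] /=; rewrite ?ffunE.
Qed.

Lemma ppmE N nu (y : {ffun 'I_N.+1 -> T}) :
  ppm nu y = nu (y ord0) * ppm (fun _ => 1) y.
Proof. by rewrite /ppm !big_ord_recl /= mul1r. Qed.

Lemma ppm_cons N mu t (y : {ffun 'I_N -> T}) :
  ppm mu (consf t y) = mu t * ppm (P t) y.
Proof.
rewrite /ppm big_ord_recl /= consf0; congr (_ * _).
apply: eq_bigr => -[[|k] hk] _ /=; rewrite consfS.
  have -> : pred_ord (lift ord0 (Ordinal hk)) = ord0 by apply: val_inj.
  by rewrite consf0.
have -> : pred_ord (lift ord0 (Ordinal hk)) = lift ord0 (pred_ord (Ordinal hk)).
  by apply: val_inj.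
by rewrite consfS.
Qed.

Lemma EE_S mu N H :
  EE mu N.+2 H = EE (step mu (H 0%N)) N.+1 (fun k => H k.+1).
Proof.
rewrite /EE sum_ffunS exchange_big; apply: eq_bigr => y _.
rewrite ppmE /step !mulr_suml; apply: eq_bigr => t _.
rewrite ppm_cons ppmE big_ord_recl consf0.
under eq_bigr => i _ do rewrite consfS lift0.
ring.
Qed.

Lemma EE_1 mu H : EE mu 1 H = \sum_t mu t * H 0%N t.
Proof.
rewrite /EE sum_ffunS; apply: eq_bigr => t _.
under eq_bigr => y _ do rewrite ppm_cons big_ord1 consf0 /ppm big_ord0 mulr1.
by rewrite sumr_const card_ffun card_ord expn0.
Qed.


Lemma sumdR (F : T -> R) t : \sum_z F z * (if z == t then 1 else 0) = F t.
Proof.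
rewrite (bigD1 t) //= eqxx mulr1 big1 ?addr0 // => z /negbTE ->; exact: mulr0.
Qed.
Lemma sumdL (F : T -> R) t : \sum_z (if t == z then 1 else 0) * F z = F t.
Proof.
rewrite (bigD1 t) //= eqxx mul1r big1 ?addr0 // => z; rewrite eq_sym => /negbTE ->.
exact: mul0r.
Qed.

Lemma mpowSl n u t : mpow P n.+1 u t = \sum_s P u s * mpow P n s t.
Proof.
elim: n u t => [|n IH] u t.
  by rewrite /= sumdL sumdR.
change (\sum_z mpow P n.+1 u z * P z t = \sum_s P u s * mpow P n.+1 s t).
under eq_bigr => z _ do rewrite IH mulr_suml.
rewrite exchange_big /=; apply: eq_bigr => s _.
rewrite [X in _ = P u s * X]/= mulr_sumr; apply: eq_bigr => z _; by rewrite mulrA.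
Qed.

Hypothesis hrow : forall x, \sum_y P x y = 1.

Lemma EE_tail n mu H : (forall k t, (0 < k)%N -> H k t = 1) ->
  EE mu n.+1 H = \sum_t mu t * H 0%N t.
Proof.
elim: n mu H => [|n IH] mu H hH; first exact: EE_1.
rewrite EE_S IH; last by move=> k t kp; apply: hH.
under eq_bigr => t _ do rewrite hH // mulr1.
rewrite /step exchange_big /=; apply: eq_bigr => s _.
by rewrite -mulr_sumr hrow mulr1.
Qed.

Lemma EE_one m n mu H : (forall k t, k != m -> H k t = 1) ->
  EE mu (m + n).+1 H = \sum_t (\sum_s mu s * mpow P m s t) * H m t.
Proof.
elim: m n mu H => [|m IH] n mu H hH.
  rewrite add0n EE_tail; last by move=> k t kp; apply: hH; rewrite -lt0n.
  by apply: eq_bigr => t _; rewrite /= sumdR.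
rewrite addSn EE_S (IH n); last by move=> k t km; apply: hH.
apply: eq_bigr => t _; congr (_ * _).
under [RHS]eq_bigr => u _ do rewrite mpowSl mulr_sumr.
rewrite exchange_big /=; apply: eq_bigr => s _.
rewrite /step mulr_suml; apply: eq_bigr => u _.
by rewrite hH // mulr1 mulrA.
Qed.

Variable pi : T -> R.
Hypothesis hstat : forall s, \sum_t pi t * P t s = pi s.

Lemma EE_shift i n H : (forall k t, (k < i)%N -> H k t = 1) ->
  EE pi (i + n).+1 H = EE pi n.+1 (fun k => H (i + k)%N).
Proof.
elim: i H => [|i IH] H hH; first by [].
rewrite addSn EE_S.
have -> : step pi (H 0%N) = pi.
  apply/funext => s; rewrite /step.
  under eq_bigr => t _ do rewrite hH // mulr1.
  exact: hstat.
by rewrite IH //; move=> k t ki; apply: hH.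
Qed.

Definition Cov (f : T -> R) d := \sum_t (\sum_s pi s * f s * mpow P d s t) * f t.

Lemma EE_two0 f d n : (d <= n)%N ->
  EE pi n.+1 (fun k t => (if k == 0%N then f t else 1) * (if k == d then f t else 1))
  = Cov f d.
Proof.
case: d => [|d] dn.
  rewrite EE_tail; last by move=> [|k] t //; rewrite mulr1.
  rewrite /Cov; apply: eq_bigr => t _.
  by rewrite /= (sumdR (fun s => pi s * f s)) mulrA.
case: n dn => [|n] //; rewrite ltnS => dn.
rewrite EE_S -(subnKC dn) EE_one; last first.
  by move=> k t kd /=; rewrite eqSS (negbTE kd) mulr1.
rewrite /Cov; apply: eq_bigr => t _; rewrite eqxx mul1r; congr (_ * _); last by rewrite eqxx.
under [RHS]eq_bigr => u _ do rewrite mpowSl mulr_sumr.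
rewrite exchange_big /=; apply: eq_bigr => s _.
rewrite /step mulr_suml; apply: eq_bigr => u _ /=.
by rewrite mulr1 mulrA.
Qed.

Lemma EE_two f i j N : (i <= j)%N -> (j < N)%N ->
  EE pi N (fun k t => (if k == i then f t else 1) * (if k == j then f t else 1))
  = Cov f (j - i).
Proof.
move=> ij jN.
have -> : N = (i + (N - i.+1)).+1.
  by rewrite -addSn subnKC // (leq_ltn_trans ij).
rewrite EE_shift; last first.
  move=> k t ki; rewrite (ltn_eqF ki) (ltn_eqF (leq_trans ki ij)); exact: mulr1.
rewrite -(@EE_two0 f (j - i) (N - i.+1)); last by rewrite leq_subLR -ltnS -addSn subnKC // (leq_ltn_trans ij).
congr EE; apply/funext => k; apply/funext => t.
have -> : (i + k == i)%N = (k == 0%N) by rewrite -{2}(addn0 i) eqn_add2l.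
have -> : (i + k == j)%N = (k == j - i)%N by rewrite -{1}(subnKC ij) eqn_add2l.
by [].
Qed.

Lemma EE_single f i N : (i < N)%N ->
  EE pi N (fun k t => if k == i then f t else 1) = \sum_t pi t * f t.
Proof.
move=> iN.
have -> : N = (i + (N - i.+1)).+1 by rewrite -addSn subnKC.
rewrite EE_shift; last by move=> k t ki; rewrite (ltn_eqF ki).
rewrite EE_tail; first by rewrite addn0 eqxx.
move=> k t kp.
have -> : (i + k == i)%N = (k == 0%N) by rewrite -{2}(addn0 i) eqn_add2l.
by rewrite eqn0Ngt kp.
Qed.

End Paths.

Section Var.
Variables (R : realType) (T : finType) (P : T -> T -> R) (pi : T -> R).
Hypothesis hrow : forall x, \sum_y P x y = 1.
Hypothesis hrev : forall x y, pi x * P x y = pi y * P y x.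

Lemma hstat : forall s, \sum_t pi t * P t s = pi s.
Proof.
move=> s; under eq_bigr => t _ do rewrite hrev.
by rewrite -mulr_sumr hrow mulr1.
Qed.

Lemma prod_if N (F : 'I_N -> R) (i : 'I_N) :
  \prod_(k < N) (if (k : nat) == (i : nat) then F k else 1) = F i.
Proof. by rewrite -big_mkcond /= (big_pred1 i). Qed.

Lemma mean_sumE f N :
  mean_sum pi P f N = N%:R * \sum_t pi t * f t.
Proof.
rewrite /mean_sum /path_sum.
under eq_bigr => x _ do rewrite mulr_sumr.
rewrite exchange_big /=.
under eq_bigr => i _.
  have -> : \sum_(x : {ffun 'I_N -> T}) path_prob pi P x * f (x i) =
     EE P pi N (fun k t => if k == i then f t else 1).
    by apply: eq_bigr => x _; rewrite (prod_if (fun k => f (x k))).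
  rewrite (EE_single hrow hstat) //.
  over.
by rewrite sumr_const card_ord mulr_natl.
Qed.

Definition dist (i j : nat) := ((i - j) + (j - i))%N.

Lemma var_sumE f N :
  var_sum pi P f N =
  \sum_(i < N) \sum_(j < N) Cov P pi (fun t => f t - \sum_u pi u * f u) (dist i j).
Proof.
set mu := \sum_u pi u * f u; set f0 := fun t => f t - mu.
rewrite /var_sum mean_sumE -/mu.
have hS : forall x : {ffun 'I_N -> T},
    path_sum f x - N%:R * mu = \sum_(i < N) f0 (x i).
  move=> x; rewrite /path_sum /f0 sumrB sumr_const card_ord mulr_natl //.
under eq_bigr => x _ do rewrite hS expr2 big_distrlr /= mulr_sumr.
rewrite exchange_big /=; apply: eq_bigr => i _.
under eq_bigr => x _ do rewrite mulr_sumr.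
rewrite exchange_big /=; apply: eq_bigr => j _.
have -> : \sum_(x : {ffun 'I_N -> T}) path_prob pi P x * (f0 (x i) * f0 (x j)) =
   EE P pi N (fun k t => (if k == i then f0 t else 1) * (if k == j then f0 t else 1)).
  apply: eq_bigr => x _; rewrite big_split /=.
  by rewrite (prod_if (fun k => f0 (x k))) (prod_if (fun k => f0 (x k))).
case: (leqP i j) => ij.
  have -> : dist i j = (j - i)%N by rewrite /dist (eqP ij) add0n.
  exact: (EE_two hrow hstat).
have -> : dist i j = (i - j)%N.
  rewrite /dist; have /eqP -> : (j - i == 0)%N by rewrite subn_eq0 ltnW.
  by rewrite addn0.
rewrite -(@EE_two _ _ _ hrow _ hstat f0 j i N (ltnW ij)) //.
congr EE; apply/funext => k; apply/funext => t; exact: mulrC.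
Qed.

End Var.

Lemma lim_aux (R : realType) (u : R^nat) (L K : R) (B : nat -> R) :
 (forall N, (0 < N)%N -> u N = L - B N / N%:R) -> (forall N, `|B N| <= K) ->
 limn u = L.
Proof.
move=> hu hB.
have K0 : 0 <= K by apply: le_trans (hB 0%N).
apply: cvg_lim; first exact: Rhausdorff.
apply/cvgrPdist_le => e e0.
have ge0 : 0 <= K / e by rewrite divr_ge0 // ltW.
near=> N.
have N0 : (0 < N)%N by near: N; apply: nbhs_infty_gt.
have hN : (Num.bound (K / e) <= N)%N by near: N; apply: nbhs_infty_ge.
rewrite hu // opprB addrC subrK normrM normfV normr_nat.
have Npos : 0 < N%:R :> R by rewrite ltr0n.
rewrite ler_pdivrMr // (le_trans (hB N)) //.
rewrite -ler_pdivrMl // mulrC (le_trans (ltW (archi_boundP ge0))) //.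
by rewrite ler_nat.
Unshelve. all: by end_near. Qed.

Section Asym.
Variables (R : realType) (T : finType) (P : T -> T -> R) (pi : T -> R).
Hypothesis hP0 : forall x y, 0 <= P x y.
Hypothesis hrow : forall x, \sum_y P x y = 1.
Hypothesis hrev : forall x y, pi x * P x y = pi y * P y x.

Definition Pn d (w : T -> R) s := \sum_t mpow P d s t * w t.

Lemma mpow1 s t : mpow P 1 s t = P s t.
Proof. by rewrite mpowSl /= (sumdR (P s)). Qed.

Lemma Pn0 w s : Pn 0 w s = w s.
Proof. by rewrite /Pn /= sumdL. Qed.

Lemma Pn1 w s : Pn 1 w s = \sum_t P s t * w t.
Proof. by apply: eq_bigr => t _; rewrite mpow1. Qed.

Lemma PnS d w s : Pn d.+1 w s = \sum_z mpow P d s z * \sum_t P z t * w t.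
Proof.
rewrite /Pn.
change (\sum_t (\sum_z mpow P d s z * P z t) * w t =
        \sum_z mpow P d s z * \sum_t P z t * w t).
under eq_bigr => t _ do rewrite mulr_suml.
rewrite exchange_big /=; apply: eq_bigr => z _.
by rewrite mulr_sumr; apply: eq_bigr => t _; rewrite mulrA.
Qed.

Lemma rev_mpow d s t : pi s * mpow P d s t = pi t * mpow P d t s.
Proof.
elim: d s t => [|d IH] s t.
  by rewrite /= eq_sym; case: eqP => [->|_]; rewrite ?mulr1 ?mulr0.
change (pi s * (\sum_z mpow P d s z * P z t) = pi t * mpow P d.+1 t s).
rewrite mpowSl.
rewrite !mulr_sumr; apply: eq_bigr => z _.
rewrite mulrA IH.
transitivity ((pi z * P z t) * mpow P d z s); first by ring.
by rewrite hrev; ring.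
Qed.

Lemma selfadj d u w :
  \sum_s pi s * u s * Pn d w s = \sum_s pi s * Pn d u s * w s.
Proof.
rewrite /Pn.
under eq_bigr => s _ do rewrite mulr_sumr.
under [RHS]eq_bigr => s _ do rewrite mulr_sumr mulr_suml.
rewrite exchange_big /=; apply: eq_bigr => t _; apply: eq_bigr => s _.
have := rev_mpow d t s.
move=> e.
transitivity (pi s * mpow P d s t * u s * w t); first by ring.
by rewrite -e; ring.
Qed.

Lemma Cov_Pn h d : Cov P pi h d = \sum_s pi s * h s * Pn d h s.
Proof.
rewrite /Cov /Pn.
under eq_bigr => t _ do rewrite mulr_suml.
rewrite exchange_big /=; apply: eq_bigr => s _.
by rewrite mulr_sumr; apply: eq_bigr => t _; rewrite !mulrA.
Qed.

Variables (h g : T -> R).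
Hypothesis hg : forall s, g s - \sum_t P s t * g t = h s.

Lemma Pn_h d s : Pn d h s = Pn d g s - Pn d.+1 g s.
Proof.
rewrite PnS /Pn -sumrB; apply: eq_bigr => t _.
by rewrite -hg mulrBr.
Qed.

Definition aa d := \sum_s pi s * h s * Pn d g s.

Lemma Cov_a d : Cov P pi h d = aa d - aa d.+1.
Proof.
rewrite Cov_Pn /aa -sumrB; apply: eq_bigr => s _.
by rewrite Pn_h mulrBr.
Qed.

Lemma tele (b : nat -> R) N : \sum_(k < N) (b k - b k.+1) = b 0%N - b N.
Proof.
elim: N => [|N IH]; first by rewrite big_ord0 subrr.
by rewrite big_ord_recr /= IH addrA subrK.
Qed.

Lemma sumA N : \sum_(k < N) aa k.+1 =
  \sum_s pi s * (Pn 1 g s - Pn N.+1 g s) * g s.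
Proof.
rewrite /aa.
under eq_bigr => k _ do rewrite selfadj.
rewrite exchange_big /=; apply: eq_bigr => s _.
rewrite -mulr_suml -mulr_sumr.
congr (_ * _ * _).
under eq_bigr => k _ do rewrite Pn_h.
by rewrite (tele (fun k => Pn k.+1 g s)).
Qed.

Lemma mpow_ge0 n s t : 0 <= mpow P n s t.
Proof.
elim: n s t => [|n IH] s t; first by rewrite /=; case: eqP.
by apply: sumr_ge0 => z _; rewrite mulr_ge0.
Qed.

Lemma mpow_row n s : \sum_t mpow P n s t = 1.
Proof.
elim: n s => [|n IH] s; first by rewrite /= (bigD1 s) //= eqxx big1 ?addr0 // => t /negbTE; rewrite eq_sym => ->.
change (\sum_t \sum_z mpow P n s z * P z t = 1).
rewrite exchange_big /= -(IH s); apply: eq_bigr => z _.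
by rewrite -mulr_sumr hrow mulr1.
Qed.

Lemma mpow_le1 n s t : mpow P n s t <= 1.
Proof.
rewrite -(mpow_row n s) (bigD1 t) //= lerDl.
by apply: sumr_ge0 => z _; exact: mpow_ge0.
Qed.

Lemma Pn_bound n w s : `|Pn n w s| <= \sum_t `|w t|.
Proof.
rewrite /Pn (le_trans (ler_norm_sum _ _ _)) //; apply: ler_sum => t _.
rewrite normrM (ger0_norm (mpow_ge0 n s t)).
by rewrite ler_piMl ?normr_ge0 ?mpow_le1.
Qed.

End Asym.

Section Dsum.
Variables (R : realType) (c a : nat -> R).
Hypothesis hc : forall d, c d = a d - a d.+1.

Lemma sum_rev_c N : \sum_(i < N) c (N - i)%N = a 1%N - a N.+1.
Proof.
elim: N => [|N IH]; first by rewrite big_ord0 subrr.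
rewrite big_ord_recl subn0.
under eq_bigr => i _ do rewrite lift0 subSS.
by rewrite IH hc; ring.
Qed.

Lemma distE1 i N : (i < N)%N -> dist i N = (N - i)%N.
Proof. by move=> iN; rewrite /dist; have /eqP -> : (i - N == 0)%N by rewrite subn_eq0 ltnW. Qed.
Lemma distE2 i N : (i < N)%N -> dist N i = (N - i)%N.
Proof. move=> iN; rewrite /dist; have /eqP -> : (i - N == 0)%N by rewrite subn_eq0 ltnW.
by rewrite addn0. Qed.

Lemma dsum N : \sum_(i < N) \sum_(j < N) c (dist i j) =
  N%:R * (c 0%N + 2 * a 1%N) - 2 * \sum_(k < N) a k.+1.
Proof.
elim: N => [|N IH]; first by rewrite !big_ord0 mul0r mulr0 subr0.
rewrite big_ord_recr /=.
under eq_bigr => i _ do rewrite big_ord_recr /=.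
rewrite big_split /= IH.
under eq_bigr => i _ do rewrite distE1 //.
rewrite [X in _ + X = _]big_ord_recr /=.
under [X in _ + (X + _) = _]eq_bigr => i _ do rewrite distE2 //.
rewrite big_ord_recr /= !sum_rev_c /dist subnn -natr1.
ring.
Qed.
End Dsum.

Lemma asympE (R : realType) (T : finType) (P : T -> T -> R) (pi : T -> R)
  (hP0 : forall x y, 0 <= P x y) (hrow : forall x, \sum_y P x y = 1)
  (hrev : forall x y, pi x * P x y = pi y * P y x) (hpi0 : forall x, 0 <= pi x)
  (f g : T -> R) :
  let f0 := fun t => f t - \sum_u pi u * f u in
  (forall s, g s - \sum_t P s t * g t = f0 s) ->
  asymp_var pi f P = 2 * (\sum_s pi s * f0 s * g s) - \sum_s pi s * f0 s * f0 s.
Proof.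
move=> f0 hg.
set M := \sum_t `|g t|.
set A := fun N => \sum_(k < N) aa P pi f0 g k.+1.
have hA : forall N, `|A N| <= \sum_s pi s * (M + M) * `|g s|.
  move=> N; rewrite /A (sumA hrev hg) (le_trans (ler_norm_sum _ _ _)) //.
  apply: ler_sum => s _; rewrite !normrM (ger0_norm (hpi0 s)).
  apply: ler_wpM2r; first exact: normr_ge0.
  apply: ler_wpM2l => //.
  by rewrite (le_trans (ler_normB _ _)) // lerD // (Pn_bound hP0 hrow).
apply: (@lim_aux _ _ _ (2 * (\sum_s pi s * (M + M) * `|g s|)) (fun N => 2 * A N)); last first.
  by move=> N; rewrite normrM ger0_norm // ler_wpM2l.
move=> N N0.
have e s : \sum_t P s t * g t = g s - f0 s by rewrite -(hg s) opprB addrC subrK.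
have hL : Cov P pi f0 0 + 2 * aa P pi f0 g 1 =
    2 * (\sum_s pi s * f0 s * g s) - \sum_s pi s * f0 s * f0 s.
  rewrite Cov_Pn /aa.
  under eq_bigr => s _ do rewrite Pn0.
  under [X in _ + 2 * X]eq_bigr => s _ do rewrite Pn1 e mulrBr.
  rewrite sumrB; ring.
rewrite (var_sumE hrow hrev) (dsum (Cov_a pi hg)) hL -/(A N).
rewrite mulrBl [N%:R * _]mulrC mulfK // pnatr_eq0 -lt0n //.
Qed.

Section Final.
Variables (R : realType) (T : finType) (pi : T -> R) (P : T -> T -> R).
Hypothesis hP0 : forall x y, 0 <= P x y.
Hypothesis hrow : forall x, \sum_y P x y = 1.
Hypothesis hrev : forall x y, pi x * P x y = pi y * P y x.
Hypothesis hpi0 : forall x, 0 <= pi x.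

Lemma symP u w : \sum_s pi s * (\sum_t P s t * u t) * w s =
   \sum_s pi s * u s * (\sum_t P s t * w t).
Proof.
have := selfadj hrev 1 u w.
under eq_bigr => s _ do rewrite Pn1.
under [X in _ = X -> _]eq_bigr => s _ do rewrite Pn1.
by move=> ->.
Qed.

Lemma psd u : 0 <= \sum_s pi s * (u s - \sum_t P s t * u t) * u s.
Proof.
set Pu := fun s => \sum_t P s t * u t.
have E0 : \sum_s pi s * (u s - Pu s) * u s =
   \sum_s pi s * u s ^+ 2 - \sum_s pi s * u s * Pu s.
  by rewrite -sumrB; apply: eq_bigr => s _; ring.
have E1 : \sum_s \sum_t pi s * P s t * u s ^+ 2 = \sum_s pi s * u s ^+ 2.
  apply: eq_bigr => s _.
  transitivity ((\sum_t P s t) * (pi s * u s ^+ 2)); last by rewrite hrow mul1r.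
  by rewrite mulr_suml; apply: eq_bigr => t _; ring.
have E2 : \sum_s \sum_t pi s * P s t * u t ^+ 2 = \sum_s pi s * u s ^+ 2.
  rewrite exchange_big /=; apply: eq_bigr => t _.
  rewrite -(hstat hrow hrev t) mulr_suml; apply: eq_bigr => s _; ring.
have E3 : \sum_s \sum_t pi s * P s t * (u s * u t) = \sum_s pi s * u s * Pu s.
  apply: eq_bigr => s _; rewrite /Pu mulr_sumr; apply: eq_bigr => t _; ring.
have E4 : \sum_s \sum_t pi s * P s t * (u s - u t) ^+ 2 =
   \sum_s \sum_t pi s * P s t * u s ^+ 2 + \sum_s \sum_t pi s * P s t * u t ^+ 2
   - 2 * \sum_s \sum_t pi s * P s t * (u s * u t).
  rewrite -big_split mulr_sumr -sumrB; apply: eq_bigr => s _.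
  rewrite -big_split mulr_sumr -sumrB; apply: eq_bigr => t _ /=; ring.
have H : 0 <= \sum_s \sum_t pi s * P s t * (u s - u t) ^+ 2.
  apply: sumr_ge0 => s _; apply: sumr_ge0 => t _; apply: mulr_ge0; [by rewrite mulr_ge0 | exact: sqr_ge0].
rewrite -/Pu E0; move: H; rewrite E4 E1 E2 E3; lra.
Qed.

Lemma qf_delta (M : T -> T -> R) x y c :
  let h := fun s => (if s == x then 1 else 0) + c * (if s == y then 1 else 0) in
  \sum_s pi s * h s * (\sum_t M s t * h t) =
  pi x * (M x x + c * M x y) + c * (pi y * (M y x + c * M y y)).
Proof.
move=> h.
have inner : forall s, \sum_t M s t * h t = M s x + c * M s y.
  move=> s; rewrite -(sumdR (M s) x) -(sumdR (M s) y) mulr_sumr -big_split.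
  by apply: eq_bigr => t _ /=; rewrite /h mulrDr mulrCA.
under eq_bigr => s _ do rewrite inner.
rewrite -(sumdR (fun s => pi s * (M s x + c * M s y)) x).
rewrite -(sumdR (fun s => pi s * (M s x + c * M s y)) y) mulr_sumr -big_split.
apply: eq_bigr => s _ /=; rewrite /h.
move: (if s == x then _ else _) (if s == y then _ else _) => a b; ring.
Qed.

End Final.

Section Poisson.
Variables (R : realType) (T : finType) (pi : T -> R) (P : T -> T -> R).
Hypothesis hP0 : forall x y, 0 <= P x y.
Hypothesis hrow : forall x, \sum_y P x y = 1.
Hypothesis hrev : forall x y, pi x * P x y = pi y * P y x.
Hypothesis hpi : forall x, 0 < pi x.
Hypothesis hsum : \sum_x pi x = 1.
Hypothesis irr : irreducible P.

Lemma harm_const u : (forall x, \sum_y P x y * u y = u x) -> forall x y, u x = u y.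
Proof.
move=> hu x y.
pose m := Order.arg_max x predT u.
have hm : forall z, u z <= u m.
  by rewrite /m; case: arg_maxP => // i _ H z; exact: H.
suff all : forall z, u z = u m by rewrite !all.
move=> z; have [n hn] := irr m z.
elim: n z hn => [|n IH] z hn.
  by move: hn => /=; case: eqP => [->|]; rewrite ?ltxx.
have : ~~ [forall w, mpow P n m w * P w z <= 0].
  apply/negP => /forallP H.
  have : \sum_w mpow P n m w * P w z <= 0 by apply: sumr_le0 => w _; exact: H.
  by rewrite leNgt hn.
rewrite negb_forall => /existsP [w]; rewrite -ltNge => hw.
have h1 : 0 < mpow P n m w.
  rewrite lt_neqAle (mpow_ge0 hP0) andbT; apply/eqP => e.
  by rewrite -e mul0r ltxx in hw.
have h2 : 0 < P w z.
  rewrite lt_neqAle hP0 andbT; apply/eqP => e.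
  by rewrite -e mulr0 ltxx in hw.
have uw := IH w h1.
have hs : \sum_v P w v * (u w - u v) = 0.
  under eq_bigr => v _ do rewrite mulrBr.
  by rewrite sumrB -mulr_suml hrow mul1r hu subrr.
have H : P w z * (u w - u z) = 0.
  apply: (psumr_eq0P _ hs) => // v _; rewrite mulr_ge0 // subr_ge0 uw; exact: hm.
move/eqP: H; rewrite mulf_eq0 (gt_eqF h2) /= subr_eq0 => /eqP <-.
exact: uw.
Qed.

Lemma sumT_ord (F : T -> R) : \sum_t F t = \sum_(i < #|T|) F (enum_val i).
Proof.
rewrite (reindex (fun i : 'I_#|T| => enum_val i)) //; exists enum_rank => i _; 
  [exact: enum_valK | exact: enum_rankK].
Qed.

Lemma poisson f0 : \sum_s pi s * f0 s = 0 ->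
  exists g : T -> R, forall s, g s - \sum_t P s t * g t = f0 s.
Proof.
move=> hf0.
pose A : 'M[R]_(#|T|) :=
  \matrix_(i, j) ((i == j)%:R - P (enum_val j) (enum_val i)).
pose fr : 'rV[R]_(#|T|) := \row_j f0 (enum_val j).
have sub : (fr <= A)%MS.
  rewrite submxE; apply/eqP/matrixP => k j; rewrite !mxE.
  pose w i : R := cokermx A i j.
  have hw : forall i, w i = \sum_l P (enum_val l) (enum_val i) * w l.
    move=> i; have := congr1 (fun M : 'M[R]_#|T| => M i j) (mulmx_coker A).
    rewrite !mxE => e; apply/eqP; rewrite -subr_eq0 -[X in _ == X]e; apply/eqP.
    rewrite /A; under [RHS]eq_bigr => l _ do rewrite mxE mulrBl.
    rewrite sumrB; congr (_ - _).
    rewrite (bigD1 i) //= eqxx mul1r big1 ?addr0 // => l /negbTE.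
    by rewrite eq_sym => ->; rewrite mul0r.
  pose u x := w (enum_rank x) / pi x.
  have hu : forall x, \sum_y P x y * u y = u x.
    move=> x; rewrite /u.
    have -> : \sum_y P x y * (w (enum_rank y) / pi y) =
              (\sum_y P y x * w (enum_rank y)) / pi x.
      rewrite mulr_suml; apply: eq_bigr => y _.
      have py := hpi y; have px := hpi x.
      have hxy := hrev x y.
      apply: (@mulIf _ (pi x * pi y)); first by rewrite mulf_neq0 // gt_eqF.
      transitivity (w (enum_rank y) * (pi x * P x y) * (pi y / pi y)); first by ring.
      rewrite hxy divff ?gt_eqF //.
      transitivity (w (enum_rank y) * (pi y * P y x) * (pi x / pi x)); last by ring.
      by rewrite divff ?gt_eqF // mulr1.
    congr (_ / _); rewrite sumT_ord [RHS]hw enum_rankK.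
    by apply: eq_bigr => l _; rewrite enum_valK.
  have hc := harm_const hu.
  have -> : \sum_j0 fr k j0 * cokermx A j0 j = \sum_x f0 x * w (enum_rank x).
    by rewrite sumT_ord; apply: eq_bigr => l _; rewrite /fr mxE enum_valK.
  have hwx : forall x, w (enum_rank x) = pi x * (\sum_y pi y * u y).
    move=> x; have -> : \sum_y pi y * u y = u x.
      by under eq_bigr => y _ do rewrite (hc y x); rewrite -mulr_suml hsum mul1r.
    by rewrite /u mulrC divfK ?gt_eqF.
  under eq_bigr => x _ do rewrite hwx mulrA [f0 x * _]mulrC.
  by rewrite -mulr_suml hf0 mul0r.
case/submxP: sub => D hD.
exists (fun x => D 0 (enum_rank x)) => s.
have := congr1 (fun M : 'rV[R]_#|T| => M 0 (enum_rank s)) hD.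
rewrite /fr !mxE enum_rankK => ->.
rewrite /A; under [RHS]eq_bigr => i _ do rewrite mxE enum_rankK mulrBr.
rewrite sumrB; congr (_ - _).
  rewrite (bigD1 (enum_rank s)) //= eqxx mulr1 big1 ?addr0 // => l /negbTE.
  by move=> ->; rewrite mulr0.
rewrite sumT_ord; apply: eq_bigr => l _; by rewrite enum_valK mulrC.
Qed.

End Poisson.

Theorem theorem7 (R : realType) (S : finType) (pi : S -> R) (P Q : S -> S -> R)
  (hpi : full_distribution pi)
  (hP : transition_matrix P) (hQ : transition_matrix Q)
  (iP : irreducible P) (iQ : irreducible Q)
  (rP : reversible pi P) (rQ : reversible pi Q)
  (dom : efficiency_dominates pi P Q) (neq : P <> Q) :
  trace P < trace Q.
Proof.
case: hpi => hpi0 hsum; case: hP => hP0 hProw; case: hQ => hQ0 hQrow.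
have hpi0' : forall x, 0 <= pi x by move=> x; exact: ltW.
have key : forall h : S -> R,
    \sum_s pi s * h s * (\sum_t P s t * h t) <=
    \sum_s pi s * h s * (\sum_t Q s t * h t).
  move=> h.
  pose f := fun s => h s - \sum_t Q s t * h t.
  have mf : \sum_u pi u * f u = 0.
    rewrite /f; under eq_bigr => u _ do rewrite mulrBr.
    rewrite sumrB.
    have -> : \sum_u pi u * (\sum_t Q u t * h t) = \sum_t pi t * h t.
      under eq_bigr => u _ do rewrite mulr_sumr.
      rewrite exchange_big /=; apply: eq_bigr => t _.
      rewrite -(hstat hQrow rQ t) mulr_suml; apply: eq_bigr => u _.
      by rewrite mulrA.
    by rewrite subrr.
  have f0E : (fun t => f t - \sum_u pi u * f u) = f.
    by apply/funext => t; rewrite mf subr0.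
  have eQ : asymp_var pi f Q =
      2 * (\sum_s pi s * f s * h s) - \sum_s pi s * f s * f s.
    have := @asympE R S Q pi hQ0 hQrow rQ hpi0' f h.
    rewrite f0E; apply; by [].
  have [gP hgP] := poisson hP0 hProw rP hpi0 hsum iP mf.
  have eP : asymp_var pi f P =
      2 * (\sum_s pi s * f s * gP s) - \sum_s pi s * f s * f s.
    have := @asympE R S P pi hP0 hProw rP hpi0' f gP.
    by rewrite f0E; apply.
  have d := dom f; rewrite eP eQ in d.
  have ps := psd hP0 hProw rP hpi0' (fun s => h s - gP s).
  have E1 : \sum_s pi s * f s * h s =
     \sum_s pi s * h s * h s - \sum_s pi s * h s * (\sum_t Q s t * h t).
    by rewrite -sumrB; apply: eq_bigr => s _; rewrite /f; ring.
  have E2 : \sum_s pi s * ((h s - gP s) - \sum_t P s t * (h t - gP t)) * (h s - gP s)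
     = \sum_s pi s * (h s - \sum_t P s t * h t) * h s
       - \sum_s pi s * (h s - \sum_t P s t * h t) * gP s
       - \sum_s pi s * f s * h s + \sum_s pi s * f s * gP s.
    rewrite -!sumrB -big_split; apply: eq_bigr => s _ /=.
    under eq_bigr => t _ do rewrite mulrBr.
    by rewrite sumrB -hgP; ring.
  have E3 : \sum_s pi s * (h s - \sum_t P s t * h t) * gP s =
            \sum_s pi s * f s * h s.
    transitivity (\sum_s pi s * h s * gP s
                  - \sum_s pi s * (\sum_t P s t * h t) * gP s).
      by rewrite -sumrB; apply: eq_bigr => s _; ring.
    rewrite (symP rP) -sumrB; apply: eq_bigr => s _.
    by rewrite -hgP; ring.
  have E4 : \sum_s pi s * (h s - \sum_t P s t * h t) * h s =
     \sum_s pi s * h s * h s - \sum_s pi s * h s * (\sum_t P s t * h t).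
    by rewrite -sumrB; apply: eq_bigr => s _; ring.
  move: ps; rewrite E2 E3 E4; move: d; rewrite E1; lra.
have qd : forall x y c,
   pi x * (P x x + c * P x y) + c * (pi y * (P y x + c * P y y)) <=
   pi x * (Q x x + c * Q x y) + c * (pi y * (Q y x + c * Q y y)).
  move=> x y c.
  have := key (fun s => (if s == x then 1 else 0) + c * (if s == y then 1 else 0)).
  by rewrite (qf_delta pi P x y c) (qf_delta pi Q x y c).
have diag : forall x, P x x <= Q x x.
  move=> x; have := qd x x 0; rewrite !mul0r !addr0.
  by rewrite ler_pM2l.
rewrite ltNge; apply/negP => hle.
have hs0 : \sum_x (Q x x - P x x) = 0.
  apply/eqP; rewrite eq_le; apply/andP; split.
    by rewrite sumrB subr_le0.
  by apply: sumr_ge0 => x _; rewrite subr_ge0.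
have eqd : forall x, P x x = Q x x.
  move=> x; apply/eqP; rewrite eq_sym -subr_eq0; apply/eqP.
  by apply: (psumr_eq0P _ hs0) => // z _; rewrite subr_ge0.
apply: neq; apply/funext => x; apply/funext => y.
case: (eqVneq x y) => [<-|xy]; first exact: eqd.
have k1 := qd x y 1; have k2 := qd x y (-1).
have e1 := rP x y; have e2 := rQ x y.
have e3 := eqd x; have e4 := eqd y.
have : pi x * P x y = pi x * Q x y.
  move: k1 k2; rewrite !mul1r !mulN1r !mulrDr !mulrN e3 e4 -e1 -e2 => k1 k2.
  lra.
by move/mulfI; apply; rewrite gt_eqF.
Qed.
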